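(* For any finite graph $G$, if the VC-dimension of the family $\mathcal{M}(G)$ of maximal independent sets of $G$ (as subsets of $V(G)$) is $d\ge 1$, then $d\le\nu_{\mathrm{bi}}(G)$.
   Context: $\mathcal{M}(G)$ is the set system on ground set $V(G)$ consisting of all maximal independent sets of $G$ (it is the dual of the system $\mathcal{B}(G)=\{K_v\}_{v\in V(G)}$, $K_v=$ set of maximal independent sets containing $v$). The VC-dimension of a set system $\mathcal{F}$ on ground set $X$ is the largest $d$ such that some $S\subseteq X$ with $|S|=d$ satisfies: for every $B\subseteq S$ there is $A\in\mathcal{F}$ with $A\cap S=B$. $\nu_{\mathrm{bi}}(G)$ is the largest $t$ such that $G$ has $2t$ distinct vertices $u_1,\dots,u_t,v_1,\dots,v_t$ with $u_iv_j\in E(G)$ iff $i=j$. *)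

(* Defs.v *)
From mathcomp Require Import all_boot.
Set Implicit Arguments. Unset Strict Implicit. Unset Printing Implicit Defensive.

Definition simple_graph (T : finType) (e : rel T) : Prop :=
  symmetric e /\ irreflexive e.

Definition independent (T : finType) (e : rel T) (A : {set T}) : bool :=
  [forall x in A, forall y in A, ~~ e x y].

Definition maximal_independent (T : finType) (e : rel T) (A : {set T}) : bool :=
  independent e A && [forall B : {set T}, (A \proper B) ==> ~~ independent e B].

Definition MIS (T : finType) (e : rel T) : {set {set T}} :=
  [set A | maximal_independent e A].

Definition shattered (T : finType) (F : {set {set T}}) (S : {set T}) : Prop :=
  forall B : {set T}, B \subset S -> exists2 A, A \in F & A :&: S = B.

Definition vc_dim_eq (T : finType) (F : {set {set T}}) (d : nat) : Prop :=
  (exists S : {set T}, #|S| = d /\ shattered F S) /\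
  (forall S : {set T}, shattered F S -> #|S| <= d).

Definition has_bi (T : finType) (e : rel T) (t : nat) : Prop :=
  exists (u v : 'I_t -> T),
    injective u /\ injective v /\ (forall i j, u i != v j) /\
    (forall i j, e (u i) (v j) = (i == j)).

(* Main.v *)
Require Import Defs.
From mathcomp Require Import all_boot.

Theorem lemma2p20 (T : finType) (e : rel T) (d : nat) :
  simple_graph e ->
  vc_dim_eq (MIS e) d -> 1 <= d ->
  exists t, d <= t /\ has_bi e t.
Proof.
move=> [esy eirr] [[S [hS shS]] _] _.
exists d; split => //.
rewrite -hS.
pose u := @enum_val T (mem S).
have uS : forall i, u i \in S by move=> i; exact: enum_valP.
have uinj : injective u by exact: enum_val_inj.
pose Q i v := [exists A in MIS e, (A :&: S == S :\ u i) && (v \in A) && e (u i) v].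
have key : forall i, exists v, Q i v.
  move=> i.
  have [A AM AS] := shS (S :\ u i) (subsetDl _ _).
  have AM0 := AM.
  move: AM; rewrite inE /maximal_independent => /andP [Aind /forallP Amax].
  have uA : u i \notin A.
    apply/negP => uiA.
    have : u i \in A :&: S by rewrite inE uiA uS.
    by rewrite AS !inE eqxx.
  have prop : A \proper (u i |: A).
    rewrite properE subsetUr /=; apply/negP => /subsetP /(_ (u i)).
    by rewrite !inE eqxx /= => /(_ isT); apply/negP.
  move: (Amax (u i |: A)); rewrite prop /= /independent.
  move/negP => nind.
  have : ~~ [forall x in u i |: A, forall y in u i |: A, ~~ e x y] by apply/negP.
  rewrite negb_forall_in => /existsP [x /andP [xU]].
  rewrite negb_forall_in => /existsP [y /andP [yU]] /negPn exy.
  move: Aind; rewrite /independent => /forallP Aind.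
  move: xU yU; rewrite !inE => /orP [/eqP xe | xA] /orP [/eqP ye | yA].
  - by subst; rewrite eirr in exy.
  - exists y; apply/existsP; exists A; by rewrite AM0 AS eqxx yA -xe exy.
  - exists x; apply/existsP; exists A; by rewrite AM0 AS eqxx xA -ye esy exy.
  - by move: (Aind x); rewrite xA /= => /forallP /(_ y); rewrite yA exy.
pose v i := odflt (u i) [pick w | Q i w].
have vQ : forall i, Q i (v i).
  move=> i; rewrite /v; case: pickP => [w //|/= H].
  by have [w Hw] := key i; rewrite H in Hw.
have Sind : forall x y, x \in S -> y \in S -> ~~ e x y.
  move=> x y xS yS.
  have [A AM AS] := shS S (subxx _).
  move: AM; rewrite inE /maximal_independent /independent => /andP [/forallP Aind _].
  have xA : x \in A by move: xS; rewrite -{1}AS inE => /andP [].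
  have yA : y \in A by move: yS; rewrite -{1}AS inE => /andP [].
  by move: (Aind x); rewrite xA /= => /forallP /(_ y); rewrite yA.
have Euv : forall i j, e (u i) (v j) = (i == j).
  move=> i j; have := vQ j => /existsP [A /andP [AM /andP [/andP [/eqP AS vA] ev]]].
  case: (eqVneq i j) => [-> // | ij].
  move: AM; rewrite inE /maximal_independent /independent => /andP [/forallP Aind _].
  have uA : u i \in A.
    have : u i \in S :\ u j by rewrite !inE uS andbT; apply/negP => /eqP /uinj /eqP; rewrite (negbTE ij).
    by rewrite -AS inE => /andP [].
  by move: (Aind (u i)); rewrite uA /= => /forallP /(_ (v j)); rewrite vA /= => /negbTE.
exists u, v; split => //; split.
  move=> i j vij; apply/eqP; by rewrite -Euv -vij Euv.
split => // i j; apply/negP => /eqP uv.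
have := vQ j => /existsP [A /andP [AM /andP [/andP [/eqP AS vA] ev]]].
have vS : v j \in S by rewrite -uv uS.
by move: (Sind _ _ (uS j) vS); rewrite ev.
Qed.
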